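(* Let $\mathcal{A}=\{0,1\}$ and let $X$ be the simplified golden-mean tree-shift, i.e. the set of trees $t$ such that for every $x\in\Sigma^*$ the triple $(t_x,t_{x0},t_{x1})$ belongs to $\{(0,0,0),(0,1,1),(1,0,0)\}$. Then $X$ is uniformly strongly irreducible with complete prefix code $\Sigma^2$: for any two patterns $u,v$ accepted by $X$ there exists $t\in X$ with $t|_{S(u)}=u$ and $t|_{wxS(v)}=v$ for every leaf $w$ of $u$ and every $x\in\Sigma^2$.
   Context: $\Sigma=\{0,1\}$. $\Sigma^*$ is the set of finite words, $\Sigma^2$ is the set of words of length $2$, and a tree is $t:\Sigma^*\to\mathcal{A}$ with $t_x=t(x)$. A pattern $u$ is a map on a finite prefix-closed support $S(u)\subseteq\Sigma^*$. A pattern is accepted by $X$ if it occurs (at some node) in some tree of $X$. For $w\in\Sigma^*$, $t|_{wS(v)}=v$ means $t_{wy}=v_y$ for all $y\in S(v)$. A leaf of $u$ is $w\in S(u)$ with $w0,w1\notin S(u)$. *)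

(* Defs.v *)
(* Sigma = {0,1} is bool (false = 0, true = 1);
   words Sigma^* are seq bool, with x0 = rcons x false, x1 = rcons x true,
   and concatenation wx = w ++ x. The alphabet A = {0,1} is also bool. *)
From mathcomp Require Import all_boot.
Set Implicit Arguments. Unset Strict Implicit. Unset Printing Implicit Defensive.

Definition word := seq bool.
Definition tree := word -> bool.

Definition goldenX (t : tree) : Prop :=
  forall x : word,
    (t x, t (rcons x false), t (rcons x true)) \in
      [:: (false, false, false); (false, true, true); (true, false, false)].

Record pattern := Pattern { supp : seq word; lab : word -> bool }.

Definition prefix_closed (S : seq word) : Prop :=
  forall (w : word) (a : bool), rcons w a \in S -> w \in S.

Definition is_pattern (u : pattern) : Prop := prefix_closed (supp u).

Definition occurs_at (t : tree) (w : word) (v : pattern) : Prop :=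
  forall y, y \in supp v -> t (w ++ y) = lab v y.

Definition accepted (X : tree -> Prop) (u : pattern) : Prop :=
  exists t, X t /\ exists z, occurs_at t z u.

Definition is_leaf (u : pattern) (w : word) : Prop :=
  w \in supp u /\ rcons w false \notin supp u /\ rcons w true \notin supp u.

(* Main.v *)
Require Import Defs.
From mathcomp Require Import all_boot.

Section S.
Variables (u : pattern) (t0 t1 : tree) (z z1 : word).

Definition isleafb (w : word) : bool :=
  [&& w \in supp u, rcons w false \notin supp u & rcons w true \notin supp u].

Definition hh (s : word) : bool :=
  match s with [::] => false | _ :: s' => t1 (z1 ++ s') end.

Fixpoint g (p : word) (y : word) : bool :=
  match y with
  | [::] => t0 (z ++ p)
  | a :: y' => if isleafb p then hh y' else g (rcons p a) y'
  end.

Lemma pc_cat : prefix_closed (supp u) -> forall s s', s ++ s' \in supp u -> s \in supp u.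
Proof.
move=> pc s s'; elim/last_ind: s' => [|s' a IH]; first by rewrite cats0.
rewrite -rcons_cat => H; apply: IH; exact: pc H.
Qed.

Lemma notleaf p a : rcons p a \in supp u -> isleafb p = false.
Proof. by rewrite /isleafb; case: a => ->; rewrite ?andbF. Qed.

Lemma g_golden : goldenX t0 -> goldenX t1 -> forall x p,
  (g p x, g p (rcons x false), g p (rcons x true)) \in
      [:: (false, false, false); (false, true, true); (true, false, false)].
Proof.
move=> G0 G1; elim=> [|b x IH] p /=.
  case: (isleafb p) => /=; first by case: (t0 (z ++ p)); rewrite !inE.
  rewrite -!rcons_cat; exact: G0.
case: (isleafb p) => //; case: x {IH} => [|c s] /=; first by rewrite cats0; case: (t1 z1); rewrite !inE.
rewrite -!rcons_cat; exact: G1.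
Qed.

Lemma g_supp : prefix_closed (supp u) -> forall y p, p ++ y \in supp u ->
  g p y = t0 (z ++ p ++ y).
Proof.
move=> pc; elim=> [|a y IH] p /=; first by rewrite cats0.
move=> H; have H1 : rcons p a \in supp u by apply: (@pc_cat pc (rcons p a) y); rewrite cat_rcons.
rewrite (@notleaf _ _ H1) IH ?cat_rcons //.
Qed.

Lemma g_leaf : prefix_closed (supp u) -> forall w p a s, isleafb (p ++ w) ->
  g p (w ++ a :: s) = hh s.
Proof.
move=> pc; elim=> [|b w IH] p a s /=; first by rewrite cats0 => ->.
move=> H; have H0 : p ++ b :: w \in supp u by case/andP: H.
have H1 : rcons p b \in supp u by apply: (@pc_cat pc (rcons p b) w); rewrite cat_rcons.
rewrite (@notleaf _ _ H1) IH // cat_rcons //.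
Qed.
End S.

Theorem mainTheorem12 :
  forall u v : pattern,
    is_pattern u -> is_pattern v ->
    accepted goldenX u -> accepted goldenX v ->
    exists t : tree,
      goldenX t /\
      occurs_at t [::] u /\
      (forall w x : word, is_leaf u w -> size x = 2 -> occurs_at t (w ++ x) v).
Proof.
move=> u v pu pv [t0 [G0 [z O0]]] [t1 [G1 [z1 O1]]].
exists (g u t0 t1 z z1 [::]); split; first by move=> x; exact: g_golden.
split.
  move=> y Hy; rewrite (g_supp _ _ _ _ _ pu) //; exact: O0.
move=> w [|a [|b [|? ?]]] // [Hw [Hf Ht]] _ y Hy.
have L : isleafb u ([::] ++ w) by rewrite /isleafb Hw Hf Ht.
by rewrite -catA /= (g_leaf _ _ _ _ _ pu _ _ _ _ L) /=; exact: O1.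
Qed.
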